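(* Let $\Theta$ be a finite set, let $(A,u)$ be a decision problem and let $P_1,\dots,P_m$ be experiments. Then there exists a weak decomposition $(A_1^*,u_1^* ),\dots,(A_k^*,u_k^* )$ of $(A,u)$ (with finite action sets) such that $$V(P_1,\dots,P_m;(A,u))=\sum_{\ell=1}^k\max_{j=1,\dots,m}V(P_j;(A_\ell^*,u_\ell^* )).$$
   Context: $\Theta$ is a finite set of states. A decision problem is a pair $(A,u)$ with $A$ a finite nonempty action set and $u:\Theta\times A\to\mathbb{R}$; for $\alpha\in\Delta(A)$ write $u(\theta,\alpha)=\sum_a\alpha(a)u(\theta,a)$. An experiment is a map $P:\Theta\to\Delta(Y)$ with $Y$ a finite signal set. Given experiments $P_j:\Theta\to\Delta(Y_j)$, $j=1,\dots,m$, let $\mathbf Y=Y_1\times\cdots\times Y_m$ and let $\mathcal P(P_1,\dots,P_m)$ be the set of experiments $P:\Theta\to\Delta(\mathbf Y)$ whose $j$-th marginal is $P_j(\cdot|\theta)$ for every $\theta$ and $j$. A strategy is a map $\sigma:\mathbf Y\to\Delta(A)$. Define $V(P_1,\dots,P_m;(A,u))=\max_{\sigma}\min_{P\in\mathcal P(P_1,\dots,P_m)}\sum_{\theta}\sum_{\mathbf y}P(\mathbf y|\theta)u(\theta,\sigma(\mathbf y))$; for a single experiment, $V(P;(A,u))=\max_{\sigma:Y\to\Delta(A)}\sum_\theta\sum_y P(y|\theta)u(\theta,\sigma(y))$. The composition $\bigoplus_{\ell=1}^k(A_\ell,u_\ell)$ is the decision problem with action set $A_1\times\cdots\times A_k$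 and utility $u(\theta,(a_1,\dots,a_k))=\sum_\ell u_\ell(\theta,a_\ell)$. For a decision problem let $\mathcal H(A,u)=\mathrm{co}\{u(\cdot,a):a\in A\}-\mathbb{R}_+^{\Theta}$ (Minkowski difference). A decision problem $(A,u)$ admits a weak decomposition $\{(A_\ell,u_\ell)\}_{\ell=1}^k$ if $\mathcal H(\bigoplus_{\ell=1}^k(A_\ell,u_\ell))\subseteq\mathcal H(A,u)$. *)

(* Defs.v *)
From HB Require Import structures.
From mathcomp Require Import all_boot all_order all_algebra.
From mathcomp Require Import classical_sets boolp reals.
Set Implicit Arguments. Unset Strict Implicit. Unset Printing Implicit Defensive.
Import Order.TTheory GRing.Theory Num.Theory.
Local Open Scope ring_scope.
Local Open Scope classical_set_scope.

Section Defs.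
Variables (R : realType) (Theta : finType).

Definition is_dist (T : finType) (p : T -> R) : Prop :=
  (forall t, 0 <= p t) /\ \sum_(t : T) p t = 1.

Definition is_experiment (Y : finType) (P : Theta -> Y -> R) : Prop :=
  forall th, is_dist (P th).

Definition mixed_u (A : finType) (u : Theta -> A -> R) (th : Theta) (al : A -> R) : R :=
  \sum_(a : A) al a * u th a.

Definition payoff (Y A : finType) (u : Theta -> A -> R)
  (P : Theta -> Y -> R) (sigma : Y -> A -> R) : R :=
  \sum_(th : Theta) \sum_(y : Y) P th y * mixed_u u th (sigma y).

Definition is_strategy (Y A : finType) (sigma : Y -> A -> R) : Prop :=
  forall y, is_dist (sigma y).

Definition joint_sig (m : nat) (Y : 'I_m -> finType) : finType :=
  {dffun forall j : 'I_m, Y j}.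

Definition coupling (m : nat) (Y : 'I_m -> finType)
  (Ps : forall j : 'I_m, Theta -> Y j -> R) (P : Theta -> joint_sig Y -> R) : Prop :=
  is_experiment P /\
  forall th (j : 'I_m) (y : Y j),
    \sum_(yy : joint_sig Y | yy j == y) P th yy = Ps j th y.

Definition Vmulti (m : nat) (Y : 'I_m -> finType)
  (Ps : forall j : 'I_m, Theta -> Y j -> R) (A : finType) (u : Theta -> A -> R) : R :=
  sup [set v | exists sigma : joint_sig Y -> A -> R,
         is_strategy sigma /\
         v = inf [set w | exists P, coupling Ps P /\ w = payoff u P sigma]].

Definition Vsingle (Y : finType) (P : Theta -> Y -> R) (A : finType) (u : Theta -> A -> R) : R :=
  sup [set v | exists sigma : Y -> A -> R, is_strategy sigma /\ v = payoff u P sigma].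

Record dproblem := DP {
  dp_act : finType;
  dp_u : Theta -> dp_act -> R;
  dp_ne : (0 < #|dp_act|)%N }.
Arguments dp_u d th a : clear implicits.

Definition comp_act (k : nat) (D : 'I_k -> dproblem) : finType :=
  {dffun forall l : 'I_k, dp_act (D l)}.

Definition comp_u (k : nat) (D : 'I_k -> dproblem) (th : Theta) (a : comp_act D) : R :=
  \sum_(l < k) dp_u (D l) th (a l).
Arguments comp_u [k] D th a.

(* H(A,u) = co{u(.,a) : a in A} - R_+^Theta *)
Definition Hset (A : finType) (u : Theta -> A -> R) : set (Theta -> R) :=
  [set x | exists al : A -> R, is_dist al /\ forall th, x th <= mixed_u u th al].

Definition weak_decomposition (A : finType) (u : Theta -> A -> R)
  (k : nat) (D : 'I_k -> dproblem) : Prop :=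
  Hset (comp_u D) `<=` Hset u.

End Defs.
Arguments dp_u {R Theta} d th a.
Arguments comp_u {R Theta k} D th a.

(* Main.v *)
Require Import Defs.
From HB Require Import structures.
From mathcomp Require Import all_boot all_order all_algebra.
From mathcomp Require Import classical_sets boolp reals.
From mathcomp Require Import ring lra.
Import Order.TTheory GRing.Theory Num.Theory.
Local Open Scope ring_scope.

Set Implicit Arguments. Unset Strict Implicit. Unset Printing Implicit Defensive.
Section Farkas.
Variable R : realFieldType.

Lemma sum_ind (C : finType) (p : C) (G : C -> R) :
  \sum_i (i == p)%:R * G i = G p.
Proof.
rewrite (bigD1 p) //= eqxx mul1r big1 ?addr0 // => i /negPf ->; by rewrite mul0r.
Qed.

Lemma farkas_gen (V : finType) (vs : seq V) : forall (C : finType)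
  (A : C -> V -> R) (b : C -> R),
  (forall i v, v \notin vs -> A i v = 0) ->
  ~ (exists x : V -> R, forall i, \sum_v A i v * x v <= b i) ->
  exists l : C -> R, (forall i, 0 <= l i) /\
    (forall v, \sum_i l i * A i v = 0) /\ \sum_i l i * b i < 0.
Proof.
elim: vs => [|v vs IH] C A b hz hinf.
  have A0 : forall i v, A i v = 0 by move=> i v; apply: hz.
  have [i bi] : exists i, b i < 0.
    apply: contrapT => hn; apply: hinf; exists (fun _ => 0) => i.
    rewrite big1 ?mulr0; last by move=> w _; rewrite mulr0.
    by rewrite leNgt; apply/negP => h; apply: hn; exists i.
  exists (fun j => (j == i)%:R); split; first by move=> j; rewrite ler0n.
  split; first by move=> w; rewrite big1 // => j _; rewrite A0 mulr0.
  by rewrite sum_ind.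
pose coef (k : C + (C * C)) (i : C) : R := match k with
  | inl j => ((i == j) && (A j v == 0))%:R
  | inr (p, q) => if (0 < A p v) && (A q v < 0)
      then (i == p)%:R * (- A q v) + (i == q)%:R * A p v else 0 end.
have coefE : forall k F, \sum_i coef k i * F i = match k with
  | inl j => if A j v == 0 then F j else 0
  | inr (p, q) => if (0 < A p v) && (A q v < 0)
      then - A q v * F p + A p v * F q else 0 end.
  move=> [j|[p q]] F /=.
    case: eqP => hj.
      by rewrite -(sum_ind j F); apply: eq_bigr => i _; rewrite ?hj ?eqxx ?andbT.
    by rewrite big1 // => i _; rewrite andbF mul0r.
  case: ifP => _; last by rewrite big1 // => i _; rewrite mul0r.
  under eq_bigr do rewrite mulrDl -!mulrA.
  by rewrite big_split /= !sum_ind.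
have coef_ge0 k i : 0 <= coef k i.
  case: k => [j|[p q]] /=; first by rewrite ler0n.
  case: ifP => // /andP[hp hq].
  by rewrite addr_ge0 // mulr_ge0 ?ler0n // ?oppr_ge0 ?ltW.
pose A' k w := \sum_i coef k i * A i w.
pose b' k := \sum_i coef k i * b i.
have hz' : forall k w, w \notin vs -> A' k w = 0.
  move=> k w hw; case: (w =P v) => [->|hwv].
    rewrite /A' coefE; case: k => [j|[p q]]; first by case: eqP.
    by case: ifP => // _; rewrite mulNr mulrC addNr.
  rewrite /A' big1 // => i _; rewrite hz ?mulr0 //.
  by rewrite in_cons negb_or hw andbT; apply/eqP.
have hinf' : ~ exists x, forall k, \sum_w A' k w * x w <= b' k.
  move=> [x hx]; apply: hinf.
  have dotE k : \sum_w A' k w * x w = \sum_i coef k i * (\sum_w A i w * x w).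
    rewrite /A'; under eq_bigr do rewrite mulr_suml.
    rewrite exchange_big; apply: eq_bigr => i _; rewrite mulr_sumr.
    by apply: eq_bigr => w _; rewrite mulrA.
  pose r i := \sum_(w | w != v) A i w * x w.
  have dotx i : \sum_w A i w * x w = A i v * x v + r i by rewrite (bigD1 v).
  pose ub i := (b i - r i) / A i v.
  have hZ j : A j v = 0 -> A j v * x v + r j <= b j.
    move=> hj; have := hx (inl j); rewrite dotE /b' !coefE hj eqxx dotx.
    by rewrite hj.
  have hPN p q : 0 < A p v -> A q v < 0 -> ub q <= ub p.
    move=> hp hq; have := hx (inr (p, q)); rewrite dotE /b' !coefE hp hq /=.
    rewrite !dotx => h.
    rewrite /ub ler_ndivrMr // mulrAC ler_pdivrMr //.
    nra.
  have [t [ht1 ht2]] : exists t, (forall p, 0 < A p v -> t <= ub p) /\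
                               (forall q, A q v < 0 -> ub q <= t).
    case: (pselect (exists p0, 0 < A p0 v)) => [[p0 hp0]|hn].
      exists (\big[Num.min/ub p0]_(p | 0 < A p v) ub p); split.
        by move=> p hp; apply: bigmin_le_cond.
      by move=> q hq; apply: le_bigmin => //; [apply: hPN | move=> p hp; apply: hPN].
    exists (\big[Num.max/0]_(q | A q v < 0) ub q); split.
      by move=> p hp; exfalso; apply: hn; exists p.
    by move=> q hq; apply: le_bigmax_cond.
  exists (fun w => if w == v then t else x w) => i.
  rewrite (bigD1 v) //= eqxx.
  have -> : \sum_(w | w != v) A i w * (if w == v then t else x w) = r i.
    by apply: eq_bigr => w /negPf ->.
  case: (ltgtP (A i v) 0) => hi.
  - have := ht2 _ hi; rewrite /ub ler_ndivrMr // => h; lra.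
  - have := ht1 _ hi; rewrite /ub ler_pdivlMr // => h; lra.
  - by rewrite hi mul0r; have := hZ _ hi; rewrite hi mul0r.
have [mu [hmu1 [hmu2 hmu3]]] := IH _ A' b' hz' hinf'.
exists (fun i => \sum_k mu k * coef k i); split.
  by move=> i; apply: sumr_ge0 => k _; apply: mulr_ge0.
split.
  move=> w; transitivity (\sum_k mu k * A' k w); last exact: hmu2. under [LHS]eq_bigr do rewrite mulr_suml.
  rewrite exchange_big; apply: eq_bigr => k _; rewrite /A' mulr_sumr.
  by apply: eq_bigr => i _; rewrite mulrA.
rewrite (_ : \sum_i _ = \sum_k mu k * b' k) //.
under eq_bigr do rewrite mulr_suml.
rewrite exchange_big; apply: eq_bigr => k _; rewrite /b' mulr_sumr.
by apply: eq_bigr => i _; rewrite mulrA.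
Qed.

Lemma farkas (V C : finType) (A : C -> V -> R) (b : C -> R) :
  ~ (exists x : V -> R, forall i, \sum_v A i v * x v <= b i) ->
  exists l : C -> R, (forall i, 0 <= l i) /\
    (forall v, \sum_i l i * A i v = 0) /\ \sum_i l i * b i < 0.
Proof. by apply: (@farkas_gen V (enum V)) => i v; rewrite mem_enum. Qed.

End Farkas.

Section Key.
Variables (R : realType) (Theta A : finType) (u : Theta -> A -> R) (a0 : A).
Variables (m : nat) (hm : (0 < m)%N) (Y : 'I_m -> finType).
Variables (Ps : forall j : 'I_m, Theta -> Y j -> R).
Arguments Ps : clear implicits.

Definition Vt : finType := (joint_sig Y * A + {j : 'I_m & (Theta * Y j)%type})%type.
Definition Ct : finType :=
  ((joint_sig Y * A) + (joint_sig Y + (joint_sig Y + ((Theta * joint_sig Y) + unit))))%type.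

Lemma sumV (F : Vt -> R) : \sum_v F v =
  \sum_(p : joint_sig Y * A) F (inl p) + \sum_j \sum_(q : Theta * Y j) F (inr (existT _ j q)).
Proof.
rewrite big_sumType; congr (_ + _).
rewrite (@sig_big_dep _ _ _ _ (fun j => (Theta * Y j)%type : finType) (fun _ => true) (fun i _ => true) (fun i q => F (inr (existT _ i q)))) /=.
by apply: eq_bigr => -[j q].
Qed.

Lemma sumC (F : Ct -> R) : \sum_c F c =
  \sum_(p : joint_sig Y * A) F (inl p) + \sum_yy F (inr (inl yy)) +
  \sum_yy F (inr (inr (inl yy))) + \sum_(p : Theta * joint_sig Y) F (inr (inr (inr (inl p)))) +
  F (inr (inr (inr (inr tt)))).
Proof.
rewrite !big_sumType (big_pred1 tt); last by case.
by rewrite /= !addrA.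
Qed.


Lemma sumP2 (T1 T2 : finType) (F : T1 * T2 -> R) : \sum_p F p = \sum_a \sum_b F (a, b).
Proof. by rewrite pair_bigA; apply: eq_bigr => -[]. Qed.

Lemma sum_ind_r (C : finType) (p : C) (G : C -> R) :
  \sum_i G i * (p == i)%:R = G p.
Proof. by rewrite -[RHS](sum_ind p G); apply: eq_bigr => i _; rewrite mulrC eq_sym. Qed.

Lemma sum_splitj (j : 'I_m) (F : joint_sig Y -> R) :
  \sum_yy F yy = \sum_(y : Y j) \sum_(yy : joint_sig Y) F yy * (yy j == y)%:R.
Proof.
rewrite exchange_big; apply: eq_bigr => yy _; rewrite -mulr_sumr.
by rewrite (_ : \sum_y _ = 1) ?mulr1 // -[RHS](sum_ind (yy j) (fun _ => 1)); apply: eq_bigr => y _; rewrite eq_sym mulr1.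
Qed.

Definition Acoef (c : Ct) (v : Vt) : R :=
 match c with
 | inl p => - (v == inl p)%:R
 | inr (inl yy) => match v with inl p => (p.1 == yy)%:R | inr _ => 0 end
 | inr (inr (inl yy)) => match v with inl p => - (p.1 == yy)%:R | inr _ => 0 end
 | inr (inr (inr (inl p))) => match v with
       | inl q => - ((q.1 == p.2)%:R * u p.1 q.2)
       | inr (existT j (th, y)) => (th == p.1)%:R * (p.2 j == y)%:R end
 | inr (inr (inr (inr _))) => match v with inl _ => 0 | inr (existT j (th, y)) => - Ps j th y end
 end.

Definition bvec (be : R) (c : Ct) : R :=
  match c with inl _ => 0 | inr (inl _) => 1 | inr (inr (inl _)) => -1
  | inr (inr (inr (inl _))) => 0 | inr (inr (inr (inr _))) => - be end.

Lemma key (be : R) (hPs : forall j, is_experiment (Ps j)) :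
  ~ (exists pi ga, coupling Ps pi /\ ga < be /\
       forall s, is_strategy s -> payoff u pi s <= ga) ->
  exists (s : joint_sig Y -> A -> R) (g : forall j, Theta -> Y j -> R),
    is_strategy s /\ (forall th (yy : joint_sig Y), \sum_j g j th (yy j) <= mixed_u u th (s yy)) /\
    be <= \sum_j \sum_th \sum_y Ps j th y * g j th y.
Proof.
move=> hno.
case: (pselect (exists x : Vt -> R, forall c, \sum_v Acoef c v * x v <= bvec be c)) => [[x hx]|hinf]; last first.
  exfalso.
  have [l [hl0 [hlv hlb]]] := farkas hinf.
  pose nu yy a := l (inl (yy, a)).
  pose w yy := l (inr (inl yy)) - l (inr (inr (inl yy))).
  pose pi th yy := l (inr (inr (inr (inl (th, yy))))).
  pose t := l (inr (inr (inr (inr tt)))).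
  have h0 : forall (T : finType) (F : T -> R), \sum_i F i * 0 = 0.
    by move=> T F; apply: big1 => *; rewrite mulr0.
  have Eq1 yy a : - nu yy a + w yy - \sum_th pi th yy * u th a = 0.
    have := hlv (inl (yy, a)); rewrite sumC /= mulr0 addr0.
    have -> : \sum_(p : joint_sig Y * A) l (inl p) * (1 *- (inl (yy, a) == inl p :> Vt)) = - nu yy a.
      under eq_bigr do rewrite mulrN.
      rewrite sumrN; congr (- _); rewrite -[RHS](sum_ind_r (yy, a) (fun p => l (inl p))).
      apply: eq_bigr => p _; congr (_ * _%:R).
    rewrite (sum_ind_r yy (fun i => l (inr (inl i)))).
    under [X in _ + X + _ = 0 -> _]eq_bigr do rewrite mulrN.
    rewrite sumrN (sum_ind_r yy (fun i => l (inr (inr (inl i))))).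
    have -> : \sum_(p : Theta * joint_sig Y) l (inr (inr (inr (inl p)))) * - ((yy == p.2)%:R * u p.1 a)
        = - \sum_th pi th yy * u th a.
      rewrite sumP2 -sumrN; apply: eq_bigr => th _ /=.
      under eq_bigr do rewrite mulrN mulrA.
      rewrite sumrN; congr (- _).
      rewrite -(sum_ind_r yy (fun i => l (inr (inr (inr (inl (th, i))))) * u th a)).
      by apply: eq_bigr => i _; rewrite mulrAC.
    by rewrite /w addrA.
  have Eq2 j th y : \sum_yy pi th yy * (yy j == y)%:R = t * Ps j th y.
    have := hlv (inr (existT _ j (th, y))); rewrite sumC /=.
    rewrite oppr0 !h0 !add0r.
    rewrite sumP2 /= (bigD1 th) //= [X in _ + X + _]big1 ?addr0; last first.
      by move=> th' /negPf ht; apply: big1 => yy _; rewrite eq_sym ht mul0r mulr0.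
    under eq_bigr do rewrite eqxx mul1r.
    by rewrite mulrN => /eqP; rewrite subr_eq0 => /eqP.
  have Ineq : \sum_yy w yy < t * be.
    move: hlb; rewrite sumC /=.
    rewrite !h0 add0r addr0.
    under eq_bigr do rewrite mulr1.
    under [X in _ + X + _]eq_bigr do rewrite mulrN1.
    by rewrite sumrN /w sumrB mulrN subr_lt0.
  have t0 : 0 <= t := hl0 _.
  have hpi0 th yy : 0 <= pi th yy := hl0 _.
  have hnu0 yy a : 0 <= nu yy a := hl0 _.
  have marg th : \sum_yy pi th yy = t.
    rewrite (sum_splitj (Ordinal hm)); under eq_bigr => y _ do rewrite Eq2.
    by rewrite -mulr_sumr (hPs (Ordinal hm) th).2 mulr1.
  have cw yy a : \sum_th pi th yy * u th a <= w yy.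
    by have := Eq1 yy a; have := hnu0 yy a; lra.
  have [tpos|tle] := ltrP 0 t.
    apply: hno; exists (fun th yy => pi th yy / t), ((\sum_yy w yy) / t).
    split.
      split.
        move=> th; split; first by move=> yy; apply: divr_ge0.
        by rewrite -mulr_suml marg divff // gt_eqF.
      move=> th j y; rewrite big_mkcond /=.
      transitivity (\sum_yy pi th yy * (yy j == y)%:R / t).
        by apply: eq_bigr => yy _; case: eqP => _; rewrite ?mulr1 ?mulr0 ?mul0r.
      by rewrite -mulr_suml Eq2 mulrC mulKf // gt_eqF.
    split; first by rewrite ltr_pdivrMr // mulrC.
    move=> s' hs'; rewrite /payoff exchange_big /= mulr_suml; apply: ler_sum => yy _.
    have -> : \sum_th pi th yy / t * mixed_u u th (s' yy) =
              (\sum_a s' yy a * (\sum_th pi th yy * u th a)) / t.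
      rewrite mulr_suml /mixed_u.
      under eq_bigr do rewrite mulr_sumr.
      rewrite exchange_big; apply: eq_bigr => a _; rewrite mulr_sumr mulr_suml.
      by apply: eq_bigr => th _; ring.
    apply: ler_wpM2r; first by rewrite invr_ge0 ltW.
    have [hs0 hs1] := hs' yy.
    apply: le_trans (_ : \sum_a s' yy a * w yy <= _).
      by apply: ler_sum => a _; apply: ler_wpM2l.
    by rewrite -mulr_suml hs1 mul1r.
  have t00 : t = 0 by apply/le_anti; rewrite tle t0.
  have pi0 th yy : pi th yy = 0.
    have := marg th; rewrite t00 => /eqP; rewrite psumr_eq0; last by move=> *; apply: hpi0.
    by move=> /allP /(_ yy (mem_index_enum _)) /implyP /(_ isT) /eqP.
  have wge yy : 0 <= w yy.
    have := Eq1 yy a0; under eq_bigr do rewrite pi0 mul0r.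
    rewrite big1 // subr0 => h; have := hnu0 yy a0; lra.
  move: Ineq; rewrite t00 mul0r ltNge => /negP; apply.
  by apply: sumr_ge0 => yy _; apply: wge.

pose s yy a := x (inl (yy, a)); pose g j th y := x (inr (existT _ j (th, y))).
exists s, g.
have c1 yy a : 0 <= s yy a.
  have := hx (inl (yy, a)); rewrite /=.
  under eq_bigr do rewrite mulNr.
  by rewrite sumrN sum_ind oppr_le0.
have c2 yy : \sum_a s yy a <= 1.
  have := hx (inr (inl yy)); rewrite /= sumV /=.
  rewrite [X in _ + X]big1 ?addr0; last first.
    by move=> j _; rewrite big1 // => q _; rewrite mul0r.
  rewrite sumP2 /= (bigD1 yy) //= [X in _ + X]big1 ?addr0; last first.
    by move=> yy' /negPf hy; rewrite big1 // => a _; rewrite hy mul0r.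
  by under eq_bigr do rewrite eqxx mul1r.
have c3 yy : 1 <= \sum_a s yy a.
  have := hx (inr (inr (inl yy))); rewrite /= sumV /=.
  rewrite [X in _ + X]big1 ?addr0; last first.
    by move=> j _; rewrite big1 // => q _; rewrite mul0r.
  rewrite sumP2 /= (bigD1 yy) //= [X in _ + X]big1 ?addr0; last first.
    by move=> yy' /negPf hy; rewrite big1 // => a _; rewrite hy oppr0 mul0r.
  under eq_bigr do rewrite eqxx mulN1r.
  by rewrite sumrN lerN2.
split.
  move=> yy; split; first by move=> a; apply: c1.
  by apply/eqP; rewrite eq_le c2 c3.
split.
  move=> th yy; have := hx (inr (inr (inr (inl (th, yy))))); rewrite /= sumV /=.
  have -> : \sum_(p : joint_sig Y * A) - ((p.1 == yy)%:R * u th p.2) * x (inl p) = - mixed_u u th (s yy).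
    rewrite sumP2 (bigD1 yy) //= [X in _ + X]big1 ?addr0; last first.
      by move=> yy' /negPf hy; apply: big1 => a _; rewrite hy mul0r oppr0 mul0r.
    rewrite /mixed_u -sumrN; apply: eq_bigr => a _.
    by rewrite eqxx mul1r mulNr mulrC.
  have -> : \sum_(j < m) \sum_(q : Theta * Y j)
       (let (th0, y) := q in (th0 == th)%:R * (yy j == y)%:R) *
       x (inr (existT (fun i : 'I_m => (Theta * Y i)%type) j q)) = \sum_j g j th (yy j).
    apply: eq_bigr => j _; rewrite sumP2 /= (bigD1 th) //= [X in _ + X]big1 ?addr0; last first.
      by move=> th' /negPf ht; apply: big1 => y _; rewrite ht mul0r mul0r.
    rewrite (bigD1 (yy j)) //= [X in _ + X]big1 ?addr0; last first.
      by move=> y; rewrite eq_sym => /negPf hy; rewrite hy mulr0 mul0r.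
    by rewrite !eqxx !mul1r.
  by rewrite addrC subr_le0.
have := hx (inr (inr (inr (inr tt)))); rewrite /= sumV /=.
rewrite [X in X + _]big1 ?add0r; last by move=> p _; rewrite mul0r.
set T := \sum_j \sum_th \sum_y _.
have -> : \sum_(j < m) \sum_(q : Theta * Y j)
       (let (th, y) := q in - Ps j th y) *
       x (inr (existT (fun i : 'I_m => (Theta * Y i)%type) j q)) = - T.
  rewrite /T -sumrN; apply: eq_bigr => j _; rewrite sumP2 -sumrN.
  apply: eq_bigr => th _; rewrite -sumrN; apply: eq_bigr => y _.
  by rewrite mulNr.
by rewrite lerN2.
Qed.

End Key.

Section Prod.
Variable R : realType.

Lemma sum_dffun_prod (I : finType) (T : I -> finType) (F : forall i, T i -> R) :
  \sum_(f : {dffun forall i, T i}) \prod_i F i (f i) = \prod_i \sum_(y : T i) F i y.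
Proof.
rewrite (reindex (@dffun_of_fprod I T)); last exact/onW_bij/dffun_of_fprod_bij.
pose P_ i := [ffun y => F i y].
transitivity (\sum_(t : fprod T) \prod_(i in I) P_ i (t i)).
  by apply: eq_bigr => t _; apply: eq_bigr => i _; rewrite !ffunE.
rewrite big_fprod.
transitivity (\prod_i \sum_(y : T i) P_ i y); last first.
  by apply: eq_bigr => i _; apply: eq_bigr => y _; rewrite ffunE.
under [RHS]eq_bigr => i _ do rewrite (big_tag (fun i y => P_ i y) i).
rewrite bigA_distr_big_dep.
apply: eq_bigr => g _; apply: eq_bigr => i _.
by [].
Qed.


Lemma exists_coupling (Theta : finType) m (Y : 'I_m -> finType)
  (Ps : forall j, Theta -> Y j -> R) :
  (forall j, is_experiment (Ps j)) -> exists P, coupling Ps P.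
Proof.
move=> hPs.
exists (fun th (yy : joint_sig Y) => \prod_j Ps j th (yy j)); split.
  move=> th; split.
    by move=> yy; apply: prodr_ge0 => j _; case: (hPs j th) => h _; apply: h.
  transitivity (\prod_j \sum_y Ps j th y); first exact: (sum_dffun_prod (fun j y => Ps j th y)).
  rewrite big1 // => j _.
  by case: (hPs j th).
move=> th j y.
pose F i (z : Y i) := Ps i th z * (if i == j then (Tagged Y z == Tagged Y y)%:R else 1).
transitivity (\sum_(yy : joint_sig Y) \prod_i F i (yy i)).
  rewrite big_mkcond /=; apply: eq_bigr => yy _.
  rewrite [RHS](bigD1 j) //= /F eqxx eq_Tagged /=.
  have -> : \prod_(i | i != j) (Ps i th (yy i) * (if i == j then (Tagged Y (yy i) == Tagged Y y)%:R else 1))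
     = \prod_(i | i != j) Ps i th (yy i).
    by apply: eq_bigr => i /negPf ->; rewrite mulr1.
  rewrite (bigD1 j) //=.
  by case: eqP => _; rewrite ?mulr1 ?mulr0 ?mul0r.
transitivity (\prod_i \sum_z F i z); first exact: (sum_dffun_prod F).
rewrite (bigD1 j) //= [X in _ * X]big1 ?mulr1; last first.
  move=> i /negPf hi; rewrite /F.
  under eq_bigr do rewrite hi mulr1.
  by case: (hPs i th).
rewrite /F eqxx.
under eq_bigr do rewrite eq_Tagged /=.
rewrite (bigD1 y) //= eqxx mulr1 big1 ?addr0 // => z /negPf ->.
by rewrite mulr0.
Qed.

End Prod.

Section Helpers.
Local Open Scope classical_set_scope.
Variables (R : realType) (Theta : finType).

Lemma sum_ind' (C : finType) (p : C) (G : C -> R) :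
  \sum_i (i == p)%:R * G i = G p.
Proof.
rewrite (bigD1 p) //= eqxx mul1r big1 ?addr0 // => i /negPf ->; by rewrite mul0r.
Qed.

Lemma dist_le1 (T : finType) (p : T -> R) t : is_dist p -> p t <= 1.
Proof.
case=> h0 h1; rewrite -h1 (bigD1 t) //= lerDl; exact: sumr_ge0.
Qed.

Definition Kb (A : finType) (u : Theta -> A -> R) th := \sum_a `|u th a|.

Lemma mixed_abs (A : finType) (u : Theta -> A -> R) th al :
  is_dist al -> `|mixed_u u th al| <= Kb u th.
Proof.
move=> hd; rewrite /mixed_u; apply: le_trans (ler_norm_sum _ _ _) _.
apply: ler_sum => a _; rewrite normrM ger0_norm; last by case: hd.
by apply: ler_piMl => //; apply: dist_le1.
Qed.

Lemma payoff_abs (Y A : finType) (u : Theta -> A -> R) P (s : Y -> A -> R) :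
  is_experiment P -> is_strategy s -> `|payoff u P s| <= \sum_th Kb u th.
Proof.
move=> hP hs; rewrite /payoff; apply: le_trans (ler_norm_sum _ _ _) _.
apply: ler_sum => th _; apply: le_trans (ler_norm_sum _ _ _) _.
have [h0 h1] := hP th.
apply: le_trans (_ : \sum_y P th y * Kb u th <= _).
  apply: ler_sum => y _; rewrite normrM ger0_norm //.
  by apply: ler_wpM2l => //; apply: mixed_abs.
by rewrite -mulr_suml h1 mul1r.
Qed.

Lemma sup_ge (S : set R) x M : S x -> (forall y, S y -> y <= M) -> x <= sup S.
Proof. by move=> Sx hM; apply: ub_le_sup => //; exists M. Qed.

Lemma inf_le (S : set R) x M : S x -> (forall y, S y -> M <= y) -> inf S <= x.
Proof. by move=> Sx hM; apply: ge_inf => //; exists M. Qed.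

Lemma Vsingle_best (Y A : finType) (u : Theta -> A -> R) (P : Theta -> Y -> R) (a0 : A) :
  exists f : Y -> A,
    Vsingle P u = \sum_th \sum_y P th y * u th (f y) /\
    forall s, is_strategy s -> payoff u P s <= \sum_th \sum_y P th y * u th (f y).
Proof.
pose h y a := \sum_th P th y * u th a.
have hex : forall y, exists b, forall a, h y a <= h y b.
  move=> y; have [b _ hb] := @eq_bigmax _ _ _ (\big[Num.min/h y a0]_a h y a) a0 xpredT (h y) isT (fun i _ => bigmin_le _ _ _).
  by exists b => a; rewrite -hb; apply: le_bigmax.
have [f hf] := choice hex.
have {}hf y a : h y a <= h y (f y) by apply: hf.
pose tau y a := (a == f y)%:R : R.
have tauS : is_strategy tau.
  move=> y; split; first by move=> a; rewrite ler0n.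
  by rewrite -[RHS](sum_ind' (f y) (fun _ => 1)); apply: eq_bigr => a _; rewrite mulr1.
have payE s : payoff u P s = \sum_y \sum_a s y a * h y a.
  rewrite /payoff /mixed_u exchange_big; apply: eq_bigr => y _.
  under eq_bigr do rewrite mulr_sumr.
  rewrite exchange_big; apply: eq_bigr => a _; rewrite /h mulr_sumr.
  by apply: eq_bigr => th _; rewrite mulrCA mulrA.
have payT : payoff u P tau = \sum_th \sum_y P th y * u th (f y).
  rewrite payE; under eq_bigr => y _ do rewrite /tau sum_ind'.
  by rewrite /h exchange_big.
have hle s : is_strategy s -> payoff u P s <= \sum_th \sum_y P th y * u th (f y).
  move=> hs; rewrite -payT !payE; apply: ler_sum => y _.
  rewrite /tau sum_ind'.
  have [h0 h1] := hs y.
  apply: le_trans (_ : \sum_a s y a * h y (f y) <= _).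
    by apply: ler_sum => a _; apply: ler_wpM2l.
  by rewrite -mulr_suml h1 mul1r.
exists f; split => //.
apply/eqP; rewrite eq_le; apply/andP; split.
  apply: ge_sup; first by exists (payoff u P tau), tau.
  by move=> v [s [hs ->]]; apply: hle.
rewrite -payT; apply: (@sup_ge _ _ (payoff u P tau)); first by exists tau.
by move=> v [s [hs ->]]; rewrite payT; apply: hle.
Qed.

End Helpers.

Section Main.
Local Open Scope classical_set_scope.

Lemma bigmax_attained (R : realType) m (F : 'I_m -> R) (i0 : 'I_m) :
  exists j, \big[Num.max/F i0]_(j < m) F j = F j.
Proof.
apply: (big_ind (fun x => exists j, x = F j)); first by exists i0.
  move=> x y [j ->] [j' ->]; case: (leP (F j) (F j')) => h.
    by exists j'.
  by exists j.
by move=> j _; exists j.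
Qed.

Lemma marg_lemma (R : realType) (Theta : finType) m (Y : 'I_m -> finType)
  (Ps : forall j : 'I_m, Theta -> Y j -> R) P :
  coupling Ps P -> forall th j (G : Y j -> R),
  \sum_(yy : joint_sig Y) P th yy * G (yy j) = \sum_y Ps j th y * G y.
Proof.
move=> [_ hm] th j G; rewrite (sum_splitj j). apply: eq_big => // y _.
rewrite -(hm th j y) [in RHS]big_mkcond /= mulr_suml; apply: eq_bigr => yy _.
by case: eqP => [->|]; rewrite ?mulr1 ?mulr0 ?mul0r.
Qed.

Lemma main_lemma (R : realType) (Theta : finType)
  (A : finType) (u : Theta -> A -> R) (hA : (0 < #|A|)%N)
  (m : nat) (hm : (0 < m)%N) (Y : 'I_m -> finType)
  (Ps : forall j : 'I_m, Theta -> Y j -> R)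
  (hPs : forall j, is_experiment (Ps j)) :
  exists (k : nat) (D : 'I_k -> dproblem R Theta),
    weak_decomposition u D /\
    Vmulti Ps u =
      \sum_(l < k) \big[Num.max/Vsingle (Ps (Ordinal hm)) (dp_u (D l))]_(j < m)
                      Vsingle (Ps j) (dp_u (D l)).
Proof.
have [a0 _] : exists a0 : A, a0 \in A by apply/card_gt0P.
have [P0 hP0] := exists_coupling hPs.
pose K := \sum_th Kb u th.
have payb s P : is_strategy s -> coupling Ps P -> - K <= payoff u P s <= K.
  by move=> hs hP; rewrite -ler_norml; apply: payoff_abs hP.1 hs.
have infK s : is_strategy s ->
    inf [set w | exists P, coupling Ps P /\ w = payoff u P s] <= K.
  move=> hs; apply: le_trans (_ : payoff u P0 s <= K); last by case/andP: (payb s P0 hs hP0).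
  apply: (@inf_le _ _ _ (-K)); first by exists P0.
  by move=> w [P [hP ->]]; case/andP: (payb s P hs hP).
pose sA (yy : joint_sig Y) (a : A) : R := (a == a0)%:R.
have hsA : is_strategy sA.
  move=> yy; split; first by move=> a; rewrite ler0n.
  by rewrite -[RHS](sum_ind' a0 (fun _ => 1)); apply: eq_bigr => a _; rewrite mulr1.
case: (pselect (exists th : Theta, True)) => [[th0 _]|hTh]; last first.
  exists 0%N, (fun _ => DP u hA); split.
    move=> x _; exists (fun a => (a == a0)%:R); split.
      split; first by move=> a; rewrite ler0n.
      by rewrite -[RHS](sum_ind' a0 (fun _ => 1)); apply: eq_bigr => a _; rewrite mulr1.
    by move=> th; exfalso; apply: hTh; exists th.
  rewrite big_ord0.
  have pay0 (s : joint_sig Y -> A -> R) (P : Theta -> joint_sig Y -> R) : payoff u P s = 0.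
    by rewrite /payoff big1 // => th _; exfalso; apply: hTh; exists th.
  have infge s : 0 <= inf [set w | exists P, coupling Ps P /\ w = payoff u P s].
    by apply: lb_le_inf; [exists (payoff u P0 s), P0 | move=> w [P [_ ->]]; rewrite pay0].
  have infle s : inf [set w | exists P, coupling Ps P /\ w = payoff u P s] <= 0.
    apply: le_trans (@inf_le _ _ (payoff u P0 s) 0 _ _) _; first by exists P0.
      by move=> w [P [_ ->]]; rewrite pay0.
    by rewrite pay0.
  apply/le_anti/andP; split.
    apply: ge_sup; first by exists (inf [set w | exists P, coupling Ps P /\ w = payoff u P sA]), sA.
    by move=> v [s [_ ->]].
  apply: le_trans (infge sA) _.
  apply: (@sup_ge _ _ _ 0); first by exists sA.
  by move=> v [s [_ ->]].
have hY l : (0 < #|Y l|)%N.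
  apply/card_gt0P; apply: contrapT => hn.
  have := (hPs l th0).2; rewrite big1 => [/eqP|y _]; first by rewrite eq_sym oner_eq0.
  by exfalso; apply: hn; exists y.
have hno : ~ exists pi ga, coupling Ps pi /\ ga < Vmulti Ps u /\
      forall s, is_strategy s -> payoff u pi s <= ga.
  move=> [pi [ga [hpi [hlt hle]]]].
  suff : Vmulti Ps u <= ga by rewrite leNgt hlt.
  apply: ge_sup; first by exists (inf [set w | exists P, coupling Ps P /\ w = payoff u P sA]), sA.
  move=> v [s [hs ->]]; apply: le_trans (hle s hs).
  apply: (@inf_le _ _ _ (-K)); first by exists pi.
  by move=> w [P [hP ->]]; case/andP: (payb s P hs hP).
have [s [g [hs [hF hL]]]] := key a0 hm hPs hno.
exists m, (fun l => DP (g l) (hY l)); split.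
  move=> x [al [hal hx]]; exists (fun a => \sum_c al c * s c a); split.
    split; first by move=> a; apply: sumr_ge0 => c _; apply: mulr_ge0; [case: hal|case: (hs c)].
    rewrite exchange_big /=; under eq_bigr => c _ do rewrite -mulr_sumr (hs c).2 mulr1.
    by case: hal.
  move=> th; apply: le_trans (hx th) _.
  rewrite /mixed_u /comp_u /=.
  have -> : \sum_a (\sum_c al c * s c a) * u th a = \sum_c al c * \sum_a s c a * u th a.
    under eq_bigr do rewrite mulr_suml.
    rewrite exchange_big; apply: eq_bigr => c _; rewrite mulr_sumr.
    by apply: eq_bigr => a _; rewrite mulrA.
  apply: ler_sum => c _; apply: ler_wpM2l; first by case: hal.
  exact: hF.
rewrite /=.
have hW l : exists j, \big[Num.max/Vsingle (Ps (Ordinal hm)) (g l)]_(j < m) Vsingle (Ps j) (g l)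
    = Vsingle (Ps j) (g l) by apply: bigmax_attained.
apply/le_anti/andP; split.
  apply: le_trans hL _; apply: ler_sum => l _.
  have [a1 _] : exists y : Y l, y \in Y l by apply/card_gt0P.
  have [f [hV hle]] := Vsingle_best (g l) (Ps l) a1.
  apply: le_trans (_ : Vsingle (Ps l) (g l) <= _); last by apply: le_bigmax.
  rewrite hV; apply: le_trans (hle (fun y c => (c == y)%:R) _).
    rewrite /payoff /mixed_u; apply: ler_sum => th _; apply: ler_sum => y _.
    by rewrite sum_ind' lexx.
  move=> y; split; first by move=> c; rewrite ler0n.
  by rewrite -[RHS](sum_ind' y (fun _ => 1)); apply: eq_bigr => c _; rewrite mulr1.
pose jl l := projT1 (cid (hW l)).
have hjl l : \big[Num.max/Vsingle (Ps (Ordinal hm)) (g l)]_(j < m) Vsingle (Ps j) (g l)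
    = Vsingle (Ps (jl l)) (g l) := projT2 (cid (hW l)).
have hf l : exists f : Y (jl l) -> Y l,
    Vsingle (Ps (jl l)) (g l) = \sum_th \sum_y Ps (jl l) th y * g l th (f y).
  have [a1 _] : exists y : Y l, y \in Y l by apply/card_gt0P.
  by have [f [hV _]] := Vsingle_best (g l) (Ps (jl l)) a1; exists f.
pose F l := projT1 (cid (hf l)).
have hF' l : Vsingle (Ps (jl l)) (g l) = \sum_th \sum_y Ps (jl l) th y * g l th (F l y)
  := projT2 (cid (hf l)).
have -> : \sum_(l < m) \big[Num.max/Vsingle (Ps (Ordinal hm)) (g l)]_(j < m) Vsingle (Ps j) (g l)
    = \sum_l \sum_th \sum_y Ps (jl l) th y * g l th (F l y).
  by apply: eq_bigr => l _; rewrite hjl hF'.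
pose c (yy : joint_sig Y) : joint_sig Y := @finfun _ (fun l => Y l) (fun l => F l (yy (jl l))).
pose s' yy := s (c yy).
have hs' : is_strategy s' by move=> yy; apply: hs.
apply: le_trans (_ : inf [set w | exists P, coupling Ps P /\ w = payoff u P s'] <= _).
  apply: lb_le_inf; first by exists (payoff u P0 s'), P0.
  move=> w [P [hP ->]].
  have E : \sum_l \sum_th \sum_y Ps (jl l) th y * g l th (F l y) =
      \sum_th \sum_yy P th yy * \sum_l g l th (c yy l).
    under [RHS]eq_bigr => th _ do under eq_bigr => yy _ do rewrite mulr_sumr.
    under [RHS]eq_bigr => th _ do rewrite exchange_big.
    rewrite [RHS]exchange_big; apply: eq_bigr => l _; apply: eq_bigr => th _.
    rewrite -(marg_lemma hP th (j:=jl l) (fun z => g l th (F l z))).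
    by apply: eq_bigr => yy _; rewrite ffunE.
  rewrite E /payoff; apply: ler_sum => th _; apply: ler_sum => yy _.
  apply: ler_wpM2l; first by case: hP => hP' _; case: (hP' th) => h _; apply: h.
  exact: hF th (c yy).
apply: (@sup_ge _ _ _ K); first by exists s'.
by move=> v [s2 [hs2 ->]]; apply: infK.
Qed.

End Main.

Unset Implicit Arguments. Set Strict Implicit.

Theorem theorem3 (R : realType) (Theta : finType)
  (A : finType) (u : Theta -> A -> R) (hA : (0 < #|A|)%N)
  (m : nat) (hm : (0 < m)%N) (Y : 'I_m -> finType)
  (Ps : forall j : 'I_m, Theta -> Y j -> R)
  (hPs : forall j, is_experiment (Ps j)) :
  exists (k : nat) (D : 'I_k -> dproblem R Theta),
    weak_decomposition u D /\
    Vmulti Ps u =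
      \sum_(l < k) \big[Num.max/Vsingle (Ps (Ordinal hm)) (dp_u (D l))]_(j < m)
                      Vsingle (Ps j) (dp_u (D l)).
Proof. exact: (@main_lemma R Theta A u hA m hm Y Ps hPs). Qed.
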